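(* Let $C$ be a contractible globular extension with a pregroupoidal structure and $G$ an $\infty$-groupoid of type $C$. For every $n\ge 1$, $\Pi_n(G)$ is a groupoid.
   Context: The globe category $\mathbb{G}$ has objects $D_n$ ($n\ge0$), generated by $\sigma_n,\tau_n\colon D_{n-1}\to D_n$ ($n\ge1$) with $\sigma_{n+1}\sigma_n=\tau_{n+1}\sigma_n$, $\sigma_{n+1}\tau_n=\tau_{n+1}\tau_n$; $\sigma^i_j=\sigma_i\cdots\sigma_{j+1}$, $\tau^i_j=\tau_i\cdots\tau_{j+1}$. A table of dimensions: integers $i_1,\dots,i_n,i'_1,\dots,i'_{n-1}$ with $i_k>i'_k<i_{k+1}$; dimension = largest entry. In a category $C$ under $\mathbb{G}$, its globular sum is the colimit of $D_{i_1}\xleftarrow{\sigma^{i_1}_{i'_1}}D_{i'_1}\xrightarrow{\tau^{i_2}_{i'_1}}D_{i_2}\leftarrow\cdots\xrightarrow{\tau^{i_n}_{i'_{n-1}}}D_{i_n}$, written $D_{i_1}\amalg_{D_{i'_1}}\cdots\amalg_{D_{i'_{n-1}}}D_{i_n}$. A globular extension is a category under $\mathbb{G}$ with all globular sums. $f,g\colon D_n\to X$ are globularly parallel if $n=0$ or $f\sigma_n=g\sigma_n$, $f\tau_n=g\tau_n$; a lifting of $(f,g)$ is $h\colon D_{n+1}\to X$ with $h\sigma_{n+1}=f$, $h\tau_{n+1}=g$; $(f,g)\colon D_n\to S$ is admissible if globularly parallel with $S$ a globular sum of dimension $\le n+1$; $C$ is contractible if every admissible pair has a lifting. An $\infty$-groupoid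 of type $C$ is a presheaf $G$ on $C$ such that each canonical map $G(D_{i_1}\amalg_{D_{i'_1}}\cdots\amalg_{D_{i'_{n-1}}}D_{i_n})\to G_{i_1}\times_{G_{i'_1}}\cdots\times_{G_{i'_{n-1}}}G_{i_n}$ is bijective, where $G_i=G(D_i)$ ($i$-arrows), $s=G(\sigma_i)$, $t=G(\tau_i)$ (source, target), $s^i_j=G(\sigma^i_j)$, $t^i_j=G(\tau^i_j)$, and the fiber product consists of $(u_1,\dots,u_n)$ with $s^{i_k}_{i'_k}(u_k)=t^{i_{k+1}}_{i'_k}(u_{k+1})$. A pregroupoidal structure on $C$ consists of morphisms $\nabla^i_j\colon D_i\to D_i\amalg_{D_j}D_i$ ($i>j\ge0$), $\kappa_i\colon D_{i+1}\to D_i$, $w^i_j\colon D_i\to D_i$ with $\nabla^i_{i-1}\sigma_i=\epsilon_2\sigma_i$, $\nabla^i_{i-1}\tau_i=\epsilon_1\tau_i$ ($\epsilon_1,\epsilon_2$ the canonical inclusions of the first and second summand), $\nabla^i_j\sigma_i=(\sigma_i\amalg_{D_j}\sigma_i)\nabla^{i-1}_j$, $\nabla^i_j\tau_i=(\tau_i\amalg_{D_j}\tau_i)\nabla^{i-1}_j$ for $j<i-1$, $\kappa_i\sigma_{i+1}=\kappa_i\tau_{i+1}=\mathrm{id}$, $w^i_{i-1}\sigma_i=\tau_i$, $w^i_{i-1}\tau_i=\sigma_i$, $w^i_j\sigma_i=\sigma_iw^{i-1}_j$, $w^i_j\tau_i=\tau_iw^{i-1}_j$ for $j<i-1$. It induces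 on $G$: compositions $v\ast^i_ju=G(\nabla^i_j)(\xi)$ for $s^i_j(v)=t^i_j(u)$, $\xi$ corresponding to $(v,u)$; units $k_i=G(\kappa_i)\colon G_i\to G_{i+1}$. For $n$-arrows $u,v$, $u\sim v$ if some $(n+1)$-arrow has source $u$ and target $v$; this is an equivalence relation compatible with $\ast^n_{n-1}$. $\Pi_n(G)$ ($n\ge1$) is the graph with objects $G_{n-1}$, arrows $G_n/\sim$ with source/target induced by $s,t$, composition induced by $\ast^n_{n-1}$ and identities induced by $k_{n-1}$. *)

(* Defs.v *)
From Stdlib Require Import ClassicalEpsilon.
From mathcomp Require Import all_boot.

Set Implicit Arguments.
Unset Strict Implicit.
Unset Printing Implicit Defensive.

Record category := Category {
  ob :> Type;
  hom : ob -> ob -> Type;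
  idm : forall a, hom a a;
  comp : forall x y z, hom y z -> hom x y -> hom x z;
  comp_id_l : forall a b (f : hom a b), comp (idm b) f = f;
  comp_id_r : forall a b (f : hom a b), comp f (idm a) = f;
  comp_assoc : forall a b c d (h : hom c d) (g : hom b c) (f : hom a b),
      comp h (comp g f) = comp (comp h g) f }.
Arguments hom {_} _ _.
Arguments idm {_} _.
Arguments comp {_ _ _ _} _ _.

(* A category under the globe category G: a functor G -> C, i.e. objects
   D n and morphisms gsig n = sigma_{n+1}, gtau n = tau_{n+1} : D n -> D (n+1)
   satisfying the globular relations. *)
Record under_globe (C : category) := UnderGlobe {
  D : nat -> C;
  gsig : forall n, hom (D n) (D n.+1);
  gtau : forall n, hom (D n) (D n.+1);
  glob_s : forall n, comp (gsig n.+1) (gsig n) = comp (gtau n.+1) (gsig n);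
  glob_t : forall n, comp (gsig n.+1) (gtau n) = comp (gtau n.+1) (gtau n) }.
Arguments D {C} _ _.
Arguments gsig {C} _ _.
Arguments gtau {C} _ _.

Section Iterated.
Variables (C : category) (Gl : under_globe C).

Fixpoint sig_it (j k : nat) : hom (D Gl j) (D Gl (k + j)) :=
  match k return hom (D Gl j) (D Gl (k + j)) with
  | 0 => idm _
  | k'.+1 => comp (gsig Gl (k' + j)) (sig_it j k')
  end.
Fixpoint tau_it (j k : nat) : hom (D Gl j) (D Gl (k + j)) :=
  match k return hom (D Gl j) (D Gl (k + j)) with
  | 0 => idm _
  | k'.+1 => comp (gtau Gl (k' + j)) (tau_it j k')
  end.

Definition sigm (j i : nat) (h : j <= i) : hom (D Gl j) (D Gl i) :=
  ecast m (hom (D Gl j) (D Gl m)) (subnK h) (sig_it j (i - j)).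
Definition taum (j i : nat) (h : j <= i) : hom (D Gl j) (D Gl i) :=
  ecast m (hom (D Gl j) (D Gl m)) (subnK h) (tau_it j (i - j)).
End Iterated.

(* Tables of dimensions: tops i_1..i_n are top 0 .. top tlen,          *)
(* bottoms i'_1..i'_{n-1} are bot 0 .. bot (tlen-1);  n = tlen + 1.    *)
Record table := Table { tlen : nat; top : nat -> nat; bot : nat -> nat }.

Definition valid_table (T : table) : Prop :=
  forall k, k < tlen T -> bot T k < top T k /\ bot T k < top T k.+1.

(* dimension = largest entry (the bottoms are smaller than the tops) *)
Definition tdim (T : table) : nat := \max_(k < (tlen T).+1) top T k.

(* the table  (i ; j ; i), giving D_i  amalg_{D_j} D_i *)
Definition tbl2 (i j : nat) : table := Table 1 (fun _ => i) (fun _ => j).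

Section Cocones.
Variables (C : category) (Gl : under_globe C).

(* cocones on the diagram D_{i1} <- D_{i'1} -> D_{i2} <- ... -> D_{in} *)
Definition is_cocone (T : table) (X : C)
    (u : forall k, hom (D Gl (top T k)) X) : Prop :=
  forall k (h1 : bot T k <= top T k) (h2 : bot T k <= top T k.+1),
    k < tlen T -> comp (u k) (sigm Gl h1) = comp (u k.+1) (taum Gl h2).
End Cocones.

(* A globular extension: a category under G with (chosen) globular sums,
   i.e. colimits of all the diagrams associated to tables. *)
Record glob_ext (C : category) := GlobExt {
  gl :> under_globe C;
  gsum : table -> C;
  ginj : forall T k, hom (D gl (top T k)) (gsum T);
  gfact : forall T (X : C), (forall k, hom (D gl (top T k)) X) -> hom (gsum T) X;
  gsum_cocone : forall T, valid_table T -> @is_cocone C gl T (gsum T) (ginj T);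
  gfact_comm : forall T, valid_table T -> forall X u, @is_cocone C gl T X u ->
      forall k, k <= tlen T -> comp (gfact u) (ginj T k) = u k;
  gfact_uniq : forall T, valid_table T -> forall X (f g : hom (gsum T) X),
      (forall k, k <= tlen T -> comp f (ginj T k) = comp g (ginj T k)) -> f = g }.
Arguments gsum {C} _ _.
Arguments ginj {C} _ _ _.
Arguments gfact {C} _ _ _ _.

Section Contractible.
Variables (C : category) (E : glob_ext C).

Definition glob_parallel (n : nat) (X : C) (f g : hom (D E n) X) : Prop :=
  match n return hom (D E n) X -> hom (D E n) X -> Prop with
  | 0 => fun _ _ => True
  | m.+1 => fun f g => comp f (gsig E m) = comp g (gsig E m) /\
                       comp f (gtau E m) = comp g (gtau E m)
  end f g.

Definition is_lifting (n : nat) (X : C) (f g : hom (D E n) X)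
    (h : hom (D E n.+1) X) : Prop :=
  comp h (gsig E n) = f /\ comp h (gtau E n) = g.

Definition contractible : Prop :=
  forall (n : nat) (T : table), valid_table T -> tdim T <= n.+1 ->
  forall f g : hom (D E n) (gsum E T), glob_parallel f g ->
  exists h, is_lifting f g h.

Definition amalg_sig (i j : nat) : hom (gsum E (tbl2 i j)) (gsum E (tbl2 i.+1 j)) :=
  gfact E (tbl2 i j) _
    (fun k => comp (ginj E (tbl2 i.+1 j) k : hom (D E i.+1) _) (gsig E i)).
Definition amalg_tau (i j : nat) : hom (gsum E (tbl2 i j)) (gsum E (tbl2 i.+1 j)) :=
  gfact E (tbl2 i j) _
    (fun k => comp (ginj E (tbl2 i.+1 j) k : hom (D E i.+1) _) (gtau E i)).

Definition eps1 (i j : nat) : hom (D E i) (gsum E (tbl2 i j)) := ginj E (tbl2 i j) 0.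
Definition eps2 (i j : nat) : hom (D E i) (gsum E (tbl2 i j)) := ginj E (tbl2 i j) 1.
End Contractible.

(* Pregroupoidal structure (indices shifted: the paper's sigma_{i+1} is gsig i). *)
Record pregroupoidal (C : category) (E : glob_ext C) := Pregroupoidal {
  nabla : forall i j, j < i -> hom (D E i) (gsum E (tbl2 i j));
  kappa : forall i, hom (D E i.+1) (D E i);
  wrev : forall i j, j < i -> hom (D E i) (D E i);
  nabla_top_s : forall i,
    comp (nabla (ltnSn i)) (gsig E i) = comp (eps2 E i.+1 i) (gsig E i);
  nabla_top_t : forall i,
    comp (nabla (ltnSn i)) (gtau E i) = comp (eps1 E i.+1 i) (gtau E i);
  nabla_s : forall i j (h : j < i.+1) (h' : j < i),
    comp (nabla h) (gsig E i) = comp (amalg_sig E i j) (nabla h');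
  nabla_t : forall i j (h : j < i.+1) (h' : j < i),
    comp (nabla h) (gtau E i) = comp (amalg_tau E i j) (nabla h');
  kappa_s : forall i, comp (kappa i) (gsig E i) = idm (D E i);
  kappa_t : forall i, comp (kappa i) (gtau E i) = idm (D E i);
  wrev_top_s : forall i, comp (wrev (ltnSn i)) (gsig E i) = gtau E i;
  wrev_top_t : forall i, comp (wrev (ltnSn i)) (gtau E i) = gsig E i;
  wrev_s : forall i j (h : j < i.+1) (h' : j < i),
    comp (wrev h) (gsig E i) = comp (gsig E i) (wrev h');
  wrev_t : forall i j (h : j < i.+1) (h' : j < i),
    comp (wrev h) (gtau E i) = comp (gtau E i) (wrev h') }.
Arguments nabla {C E} _ {i j} _.
Arguments kappa {C E} _ _.

Record presheaf (C : category) := Presheaf {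
  pob :> C -> Type;
  pmap : forall a b, hom a b -> pob b -> pob a;
  pmap_id : forall a x, pmap (idm a) x = x;
  pmap_comp : forall a b c (g : hom b c) (f : hom a b) x,
      pmap (comp g f) x = pmap f (pmap g x) }.
Arguments pmap {C} _ {a b} _ _.

Section Groupoid.
Variables (C : category) (E : glob_ext C) (G : presheaf C).

Definition in_fiber_product (T : table) (u : forall k, G (D E (top T k))) : Prop :=
  forall k (h1 : bot T k <= top T k) (h2 : bot T k <= top T k.+1),
    k < tlen T -> pmap G (sigm E h1) (u k) = pmap G (taum E h2) (u k.+1).

(* the canonical map G(S) -> fiber product is bijective, for every table *)
Definition is_infty_groupoid : Prop :=
  forall T, valid_table T ->
    (forall x y : G (gsum E T),
        (forall k, k <= tlen T -> pmap G (ginj E T k) x = pmap G (ginj E T k) y) ->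
        x = y) /\
    (forall u, in_fiber_product u ->
        exists x : G (gsum E T), forall k, k <= tlen T -> pmap G (ginj E T k) x = u k).

Variable P : pregroupoidal E.

Definition src (n : nat) : G (D E n.+1) -> G (D E n) := pmap G (gsig E n).
Definition tgt (n : nat) : G (D E n.+1) -> G (D E n) := pmap G (gtau E n).

Definition comp_rel (i j : nat) (h : j < i) (v u w : G (D E i)) : Prop :=
  exists xi : G (gsum E (tbl2 i j)),
    pmap G (eps1 E i j) xi = v /\ pmap G (eps2 E i j) xi = u /\
    w = pmap G (nabla P h) xi.

(* the composite v *^i_j u (well defined, by bijectivity, when s^i_j v = t^i_j u) *)
Definition gcomp (i j : nat) (h : j < i) (v u : G (D E i)) : G (D E i) :=
  epsilon (inhabits v) (comp_rel h v u).

Definition vcomp (m : nat) (v u : G (D E m.+1)) : G (D E m.+1) :=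
  gcomp (ltnSn m) v u.
Definition unit (m : nat) : G (D E m) -> G (D E m.+1) := pmap G (kappa P m).

Definition sim (n : nat) (u v : G (D E n)) : Prop :=
  exists x : G (D E n.+1), src x = u /\ tgt x = v.

(* Pi_{m+1}(G): objects G_m, arrows G_{m+1}/~, source/target induced by s,t,
   composition induced by *^{m+1}_m, identities induced by k_m.
   "Pi_{m+1}(G) is a groupoid": the structure is well defined on classes and
   satisfies the category axioms, and every arrow is invertible. *)
Definition Pi_is_groupoid (m : nat) : Prop :=
  let S : G (D E m.+1) -> G (D E m.+1) -> Prop := @sim m.+1 in
  (forall u, S u u) /\
  (forall u v, S u v -> S v u) /\
  (forall u v w, S u v -> S v w -> S u w) /\
  (forall u v, S u v -> src u = src v /\ tgt u = tgt v) /\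
  (forall u u' v v', src v = tgt u -> src v' = tgt u' ->
     S u u' -> S v v' -> S (vcomp v u) (vcomp v' u')) /\
  (forall u v : G (D E m.+1), src v = tgt u ->
     src (vcomp v u) = src u /\ tgt (vcomp v u) = tgt v) /\
  (forall x : G (D E m), src (unit x) = x /\ tgt (unit x) = x) /\
  (forall u v w, src v = tgt u -> src w = tgt v ->
     S (vcomp w (vcomp v u)) (vcomp (vcomp w v) u)) /\
  (forall u, S (vcomp (unit (tgt u)) u) u /\ S (vcomp u (unit (src u))) u) /\
  (forall u, exists v, src v = tgt u /\ tgt v = src u /\
     S (vcomp v u) (unit (src u)) /\ S (vcomp u v) (unit (tgt u))).

End Groupoid.

(* Main.v *)
From Stdlib Require Import ClassicalEpsilon.
Require Import Defs.
From mathcomp Require Import all_boot.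
Set Implicit Arguments.
Unset Strict Implicit.

Lemma sigm_it (C : category) (Gl : under_globe C) j k (h : j <= k + j) :
  sigm Gl h = sig_it Gl j k.
Proof.
rewrite /sigm; move: (subnK h); rewrite addnK => e.
by rewrite (eq_irrelevance e erefl).
Qed.
Lemma taum_it (C : category) (Gl : under_globe C) j k (h : j <= k + j) :
  taum Gl h = tau_it Gl j k.
Proof.
rewrite /taum; move: (subnK h); rewrite addnK => e.
by rewrite (eq_irrelevance e erefl).
Qed.
Lemma sigm1 (C : category) (Gl : under_globe C) j (h : j <= j.+1) :
  sigm Gl h = gsig Gl j.
Proof. by rewrite (@sigm_it _ _ j 1 h) /= comp_id_r. Qed.
Lemma taum1 (C : category) (Gl : under_globe C) j (h : j <= j.+1) :
  taum Gl h = gtau Gl j.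
Proof. by rewrite (@taum_it _ _ j 1 h) /= comp_id_r. Qed.
Lemma sigm2 (C : category) (Gl : under_globe C) j (h : j <= j.+2) :
  sigm Gl h = Defs.comp (gsig Gl j.+1) (gsig Gl j).
Proof. by rewrite (@sigm_it _ _ j 2 h) /= comp_id_r. Qed.
Lemma taum2 (C : category) (Gl : under_globe C) j (h : j <= j.+2) :
  taum Gl h = Defs.comp (gtau Gl j.+1) (gtau Gl j).
Proof. by rewrite (@taum_it _ _ j 2 h) /= comp_id_r. Qed.

Definition pairm (C : category) (E : glob_ext C) (X : C) i j (a b : hom (D E i) X)
  : hom (gsum E (tbl2 i j)) X :=
  gfact E (tbl2 i j) X (fun k => if k is 0 then a else b).
Arguments pairm {C E X} i j a b.

Lemma valid_tbl2 i j : j < i -> valid_table (tbl2 i j).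
Proof. by move=> h k /=. Qed.

Lemma pairm_eq (C : category) (E : glob_ext C) (X : C) i (a b : hom (D E i.+1) X) :
  Defs.comp a (gsig E i) = Defs.comp b (gtau E i) ->
  Defs.comp (pairm i.+1 i a b) (eps1 E i.+1 i) = a /\
  Defs.comp (pairm i.+1 i a b) (eps2 E i.+1 i) = b.
Proof.
move=> hab.
have hv := valid_tbl2 (ltnSn i).
have hc : is_cocone (Gl:=E) (T:=tbl2 i.+1 i) (X:=X) (fun k => if k is 0 then a else b).
  move=> [|k] h1 h2 //= _.
  by rewrite sigm1 taum1.
split; first exact: (gfact_comm hv hc (k:=0)).
exact: (gfact_comm hv hc (k:=1)).
Qed.

Lemma tdim_le T i : (forall k, top T k <= i) -> tdim T <= i.
Proof. by move=> h; apply/bigmax_leqP => k _. Qed.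

Lemma inj2 (C : category) (E : glob_ext C) (G : presheaf C) (HG : is_infty_groupoid E G)
  i j (h : j < i) (x y : G (gsum E (tbl2 i j))) :
  Defs.pmap G (eps1 E i j) x = Defs.pmap G (eps1 E i j) y ->
  Defs.pmap G (eps2 E i j) x = Defs.pmap G (eps2 E i j) y -> x = y.
Proof.
move=> e1 e2; apply: (HG _ (valid_tbl2 h)).1 => -[|[|k]] //= _.
Qed.

Lemma fp2 (C : category) (E : glob_ext C) (G : presheaf C) (HG : is_infty_groupoid E G)
  i (a b : G (D E i.+1)) : src a = tgt b ->
  exists eta : G (gsum E (tbl2 i.+1 i)),
    Defs.pmap G (eps1 E i.+1 i) eta = a /\ Defs.pmap G (eps2 E i.+1 i) eta = b.
Proof.
move=> e.
have [_ H] := HG _ (valid_tbl2 (ltnSn i)).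
have [|x Hx] := H (fun k => if k is 0 then a else b).
  by move=> [|k] h1 h2 //= _; rewrite sigm1 taum1.
by exists x; split; [exact: (Hx 0) | exact: (Hx 1)].
Qed.

Lemma fp2' (C : category) (E : glob_ext C) (G : presheaf C) (HG : is_infty_groupoid E G)
  i (a b : G (D E i.+2)) : src (src a) = tgt (tgt b) ->
  exists eta : G (gsum E (tbl2 i.+2 i)),
    Defs.pmap G (eps1 E i.+2 i) eta = a /\ Defs.pmap G (eps2 E i.+2 i) eta = b.
Proof.
move=> e.
have [_ H] := HG _ (valid_tbl2 (ltnW (ltnSn i.+1))).
have [|x Hx] := H (fun k => if k is 0 then a else b).
  by move=> [|k] h1 h2 //= _; rewrite sigm2 taum2 !pmap_comp.
by exists x; split; [exact: (Hx 0) | exact: (Hx 1)].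
Qed.

Lemma vcomp_char (C : category) (E : glob_ext C) (G : presheaf C) (P : pregroupoidal E)
  (HG : is_infty_groupoid E G) m (eta : G (gsum E (tbl2 m.+1 m))) :
  vcomp P (Defs.pmap G (eps1 E m.+1 m) eta) (Defs.pmap G (eps2 E m.+1 m) eta) =
  Defs.pmap G (nabla P (ltnSn m)) eta.
Proof.
rewrite /vcomp /gcomp.
set Q := comp_rel _ _ _ _.
have ex : exists x, Q x by exists (Defs.pmap G (nabla P (ltnSn m)) eta), eta.
have [xi [e1 [e2 ->]]] := epsilon_spec (inhabits (Defs.pmap G (eps1 E m.+1 m) eta)) Q ex.
by rewrite (inj2 HG (ltnSn m) e1 e2).
Qed.

Lemma vcomp_st (C : category) (E : glob_ext C) (G : presheaf C) (P : pregroupoidal E)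
  (HG : is_infty_groupoid E G) m (u v : G (D E m.+1)) : src v = tgt u ->
  src (vcomp P v u) = src u /\ tgt (vcomp P v u) = tgt v.
Proof.
move=> e; have [eta [<- <-]] := fp2 HG e.
rewrite (vcomp_char P HG) /src /tgt. rewrite -!(pmap_comp (p:=G)) nabla_top_s nabla_top_t !pmap_comp.
by [].
Qed.

Lemma csim (C : category) (E : glob_ext C) (G : presheaf C) (HC : contractible E)
  m T (hT : valid_table T) (hd : tdim T <= m.+2) (f g : hom (D E m.+1) (gsum E T)) :
  Defs.comp f (gsig E m) = Defs.comp g (gsig E m) ->
  Defs.comp f (gtau E m) = Defs.comp g (gtau E m) ->
  forall xi : G (gsum E T), sim (Defs.pmap G f xi) (Defs.pmap G g xi).
Proof.
move=> es et xi.
have [h [hs ht]] := @HC m.+1 T hT hd f g (conj es et).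
exists (Defs.pmap G h xi); rewrite /src /tgt -!(pmap_comp (p:=G)).
by rewrite hs ht.
Qed.

Lemma pair_val (C : category) (E : glob_ext C) (G : presheaf C) (P : pregroupoidal E)
  (HG : is_infty_groupoid E G) m X (a b : hom (D E m.+1) X) (xi : G X) :
  Defs.comp a (gsig E m) = Defs.comp b (gtau E m) ->
  vcomp P (Defs.pmap G a xi) (Defs.pmap G b xi) =
  Defs.pmap G (Defs.comp (pairm m.+1 m a b) (nabla P (ltnSn m))) xi.
Proof.
move=> h; have [h1 h2] := pairm_eq h.
rewrite (pmap_comp (p:=G)) -(vcomp_char P HG) -!(pmap_comp (p:=G)) h1 h2.
by [].
Qed.

Lemma pair_s (C : category) (E : glob_ext C) (P : pregroupoidal E) m X
  (a b : hom (D E m.+1) X) :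
  Defs.comp a (gsig E m) = Defs.comp b (gtau E m) ->
  Defs.comp (Defs.comp (pairm m.+1 m a b) (nabla P (ltnSn m))) (gsig E m) =
  Defs.comp b (gsig E m) /\
  Defs.comp (Defs.comp (pairm m.+1 m a b) (nabla P (ltnSn m))) (gtau E m) =
  Defs.comp a (gtau E m).
Proof.
move=> h; have [h1 h2] := pairm_eq h.
by rewrite -!comp_assoc nabla_top_s nabla_top_t !comp_assoc h1 h2.
Qed.

Lemma gl_st (C : category) (E : glob_ext C) (G : presheaf C) m (x : G (D E m.+2)) :
  src (src x) = src (tgt x) /\ tgt (src x) = tgt (tgt x).
Proof.
by rewrite /src /tgt -!(pmap_comp (p:=G)) glob_s glob_t.
Qed.

Lemma hcomp_sim (C : category) (E : glob_ext C) (G : presheaf C) (P : pregroupoidal E)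
  (HC : contractible E) (HG : is_infty_groupoid E G) m (u u' v v' : G (D E m.+1)) :
  src v = tgt u -> src v' = tgt u' -> sim u u' -> sim v v' ->
  sim (vcomp P v u) (vcomp P v' u').
Proof.
move=> e e' [x [xs xt]] [y [ys yt]].
have [xi [e1 e2]] : exists xi : G (gsum E (tbl2 m.+2 m)),
    Defs.pmap G (eps1 E m.+2 m) xi = y /\ Defs.pmap G (eps2 E m.+2 m) xi = x.
  apply: (@fp2' _ _ _ HG m y x).
  by rewrite ys e -xs (gl_st x).2.
have hm : m <= m.+2 by apply: leqW.
have coc := @gsum_cocone _ E (tbl2 m.+2 m) (valid_tbl2 (ltnW (ltnSn m.+1))) 0 hm hm isT.
rewrite sigm2 taum2 /= in coc.
set i0 := eps1 E m.+2 m; set i1 := eps2 E m.+2 m.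
have hA : Defs.comp (Defs.comp i0 (gsig E m.+1)) (gsig E m) =
          Defs.comp (Defs.comp i1 (gsig E m.+1)) (gtau E m).
  by rewrite -!comp_assoc glob_t.
have hB : Defs.comp (Defs.comp i0 (gtau E m.+1)) (gsig E m) =
          Defs.comp (Defs.comp i1 (gtau E m.+1)) (gtau E m).
  by rewrite -!comp_assoc -glob_s.
have -> : vcomp P v u = Defs.pmap G (Defs.comp (pairm m.+1 m
      (Defs.comp i0 (gsig E m.+1)) (Defs.comp i1 (gsig E m.+1))) (nabla P (ltnSn m))) xi.
  rewrite -(pair_val P HG xi hA) !(pmap_comp (p:=G)) e1 e2.
  by rewrite -ys -xs.
have -> : vcomp P v' u' = Defs.pmap G (Defs.comp (pairm m.+1 m
      (Defs.comp i0 (gtau E m.+1)) (Defs.comp i1 (gtau E m.+1))) (nabla P (ltnSn m))) xi.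
  rewrite -(pair_val P HG xi hB) !(pmap_comp (p:=G)) e1 e2.
  by rewrite -yt -xt.
have [sA tA] := pair_s P hA; have [sB tB] := pair_s P hB.
apply: (@csim C E G HC m (tbl2 m.+2 m)).
- exact: (valid_tbl2 (ltnW (ltnSn m.+1))).
- by apply: tdim_le.
- by rewrite sA sB -!comp_assoc glob_s.
- by rewrite tA tB -!comp_assoc glob_t.
Qed.

Definition tbl1 (i : nat) : table := Table 0 (fun _ => i) (fun _ => i).
Definition tbl3 (i j : nat) : table := Table 2 (fun _ => i) (fun _ => j).

Lemma valid_tbl1 i : valid_table (tbl1 i).
Proof. by move=> k. Qed.
Lemma valid_tbl3 i j : j < i -> valid_table (tbl3 i j).
Proof. by move=> h k /=. Qed.

Lemma assoc_sim (C : category) (E : glob_ext C) (G : presheaf C) (P : pregroupoidal E)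
  (HC : contractible E) (HG : is_infty_groupoid E G) m (u v w : G (D E m.+1)) :
  src v = tgt u -> src w = tgt v ->
  sim (vcomp P w (vcomp P v u)) (vcomp P (vcomp P w v) u).
Proof.
move=> evu ewv.
have hv := valid_tbl3 (ltnSn m).
have [xi Hxi] : exists xi : G (gsum E (tbl3 m.+1 m)), forall k, k <= 2 ->
    Defs.pmap G (ginj E (tbl3 m.+1 m) k) xi =
    (match k with 0 => w | 1 => v | _ => u end).
  apply: (HG _ hv).2 => -[|[|k]] h1 h2 //= _; rewrite sigm1 taum1 //.
set i0 := ginj E (tbl3 m.+1 m) 0; set i1 := ginj E (tbl3 m.+1 m) 1;
  set i2 := ginj E (tbl3 m.+1 m) 2.
have hm : m <= m.+1 by [].
have c0 : Defs.comp i0 (gsig E m) = Defs.comp i1 (gtau E m).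
  by have := @gsum_cocone _ E _ hv 0 hm hm isT; rewrite sigm1 taum1.
have c1 : Defs.comp i1 (gsig E m) = Defs.comp i2 (gtau E m).
  by have := @gsum_cocone _ E _ hv 1 hm hm isT; rewrite sigm1 taum1.
have <- : Defs.pmap G i0 xi = w by exact: (Hxi 0).
have <- : Defs.pmap G i1 xi = v by exact: (Hxi 1).
have <- : Defs.pmap G i2 xi = u by exact: (Hxi 2).
set mu := nabla P (ltnSn m).
set beta := Defs.comp (pairm m.+1 m i1 i2) mu.
have [bs bt] := pair_s P c1.
have hg : Defs.comp i0 (gsig E m) = Defs.comp beta (gtau E m) by rewrite bt.
set delta := Defs.comp (pairm m.+1 m i0 i1) mu.
have [ds dt] := pair_s P c0.
have he : Defs.comp delta (gsig E m) = Defs.comp i2 (gtau E m) by rewrite ds.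
rewrite (pair_val P HG xi c1) -/beta (pair_val P HG xi hg).
rewrite (pair_val P HG xi c0) -/delta (pair_val P HG xi he).
have [fs ft] := pair_s P hg; have [gs gt] := pair_s P he.
apply: (@csim C E G HC m (tbl3 m.+1 m)) => //.
- by apply: tdim_le => k; apply: leqW.
- by rewrite fs gs bs.
- by rewrite ft gt dt.
Qed.

Lemma one_xi (C : category) (E : glob_ext C) (G : presheaf C)
  (HG : is_infty_groupoid E G) m (u : G (D E m.+1)) :
  exists xi : G (gsum E (tbl1 m.+1)), Defs.pmap G (ginj E (tbl1 m.+1) 0) xi = u.
Proof.
have [xi H] := (HG _ (@valid_tbl1 m.+1)).2 (fun _ => u) (fun k _ _ h => ltac:(done)).
by exists xi; exact: (H 0).
Qed.

Lemma unit_sim (C : category) (E : glob_ext C) (G : presheaf C) (P : pregroupoidal E)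
  (HC : contractible E) (HG : is_infty_groupoid E G) m (u : G (D E m.+1)) :
  sim (vcomp P (unit P (tgt u)) u) u /\ sim (vcomp P u (unit P (src u))) u.
Proof.
have [xi <-] := one_xi HG u.
set i := ginj E (tbl1 m.+1) 0.
have hd : tdim (tbl1 m.+1) <= m.+2 by apply: tdim_le => k; apply: leqW.
split.
- have -> : unit P (tgt (Defs.pmap G i xi)) =
      Defs.pmap G (Defs.comp (Defs.comp i (gtau E m)) (kappa P m)) xi.
    by rewrite !(pmap_comp (p:=G)).
  have h : Defs.comp (Defs.comp (Defs.comp i (gtau E m)) (kappa P m)) (gsig E m) =
           Defs.comp i (gtau E m) by rewrite -comp_assoc kappa_s comp_id_r.
  rewrite (pair_val P HG xi h); have [fs ft] := pair_s P h.
  apply: (@csim C E G HC m (tbl1 m.+1) (@valid_tbl1 m.+1) hd); first exact: fs.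
  by rewrite ft -comp_assoc kappa_t comp_id_r.
- have -> : unit P (src (Defs.pmap G i xi)) =
      Defs.pmap G (Defs.comp (Defs.comp i (gsig E m)) (kappa P m)) xi.
    by rewrite !(pmap_comp (p:=G)).
  have h : Defs.comp i (gsig E m) =
     Defs.comp (Defs.comp (Defs.comp i (gsig E m)) (kappa P m)) (gtau E m)
     by rewrite -comp_assoc kappa_t comp_id_r.
  rewrite (pair_val P HG xi h); have [fs ft] := pair_s P h.
  apply: (@csim C E G HC m (tbl1 m.+1) (@valid_tbl1 m.+1) hd); last exact: ft.
  by rewrite fs -comp_assoc kappa_s comp_id_r.
Qed.

Lemma inv_sim (C : category) (E : glob_ext C) (G : presheaf C) (P : pregroupoidal E)
  (HC : contractible E) (HG : is_infty_groupoid E G) m (u : G (D E m.+1)) :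
  exists v, src v = tgt u /\ tgt v = src u /\
     sim (vcomp P v u) (unit P (src u)) /\ sim (vcomp P u v) (unit P (tgt u)).
Proof.
have [xi <-] := one_xi HG u.
set i := ginj E (tbl1 m.+1) 0.
set r := wrev P (ltnSn m).
have hd : tdim (tbl1 m.+1) <= m.+2 by apply: tdim_le => k; apply: leqW.
exists (Defs.pmap G (Defs.comp i r) xi).
rewrite /src /tgt -!(pmap_comp (p:=G)) -!comp_assoc wrev_top_s wrev_top_t.
split; first by []. split; first by [].
have -> : unit P (Defs.pmap G (Defs.comp i (gsig E m)) xi) =
      Defs.pmap G (Defs.comp (Defs.comp i (gsig E m)) (kappa P m)) xi.
  by rewrite !(pmap_comp (p:=G)).
have -> : unit P (Defs.pmap G (Defs.comp i (gtau E m)) xi) =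
      Defs.pmap G (Defs.comp (Defs.comp i (gtau E m)) (kappa P m)) xi.
  by rewrite !(pmap_comp (p:=G)).
have h1 : Defs.comp (Defs.comp i r) (gsig E m) = Defs.comp i (gtau E m)
  by rewrite -comp_assoc wrev_top_s.
have h2 : Defs.comp i (gsig E m) = Defs.comp (Defs.comp i r) (gtau E m)
  by rewrite -comp_assoc wrev_top_t.
split.
- rewrite (pair_val P HG xi h1); have [fs ft] := pair_s P h1.
  apply: (@csim C E G HC m (tbl1 m.+1) (@valid_tbl1 m.+1) hd).
  + by rewrite fs -comp_assoc kappa_s comp_id_r.
  + by rewrite ft -!comp_assoc wrev_top_t kappa_t comp_id_r.
- rewrite (pair_val P HG xi h2); have [fs ft] := pair_s P h2.
  apply: (@csim C E G HC m (tbl1 m.+1) (@valid_tbl1 m.+1) hd).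
  + by rewrite fs -!comp_assoc wrev_top_s kappa_s comp_id_r.
  + by rewrite ft -comp_assoc kappa_t comp_id_r.
Qed.

Theorem proposition4 (C : category) (E : glob_ext C) (P : pregroupoidal E)
  (HC : contractible E) (G : presheaf C) (HG : is_infty_groupoid E G)
  (n : nat) (hn : 1 <= n) :
  Pi_is_groupoid G P n.-1.
Proof.
set m := n.-1; clearbody m.
split.
  move=> u; exists (unit P u); rewrite /src /tgt -!(pmap_comp (p:=G)).
  by rewrite kappa_s kappa_t !pmap_id.
split.
  move=> u v [x [xs xt]]; exists (Defs.pmap G (wrev P (ltnSn m.+1)) x).
  by rewrite /src /tgt -!(pmap_comp (p:=G)) wrev_top_s wrev_top_t.
split.
  move=> u v w [x [xs xt]] [y [ys yt]]; exists (vcomp P y x).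
  have [h1 h2] := vcomp_st P HG (u:=x) (v:=y) (etrans ys (esym xt)).
  by rewrite h1 h2.
split.
  move=> u v [x [<- <-]]; exact: gl_st.
split.
  move=> u u' v v' e e'; exact: hcomp_sim.
split.
  move=> u v e; exact: vcomp_st.
split.
  move=> x; rewrite /src /tgt /unit -!(pmap_comp (p:=G)).
  by rewrite kappa_s kappa_t !pmap_id.
split.
  move=> u v w e e'; exact: assoc_sim.
split.
  move=> u; exact: unit_sim.
move=> u; exact: inv_sim.
Qed.
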